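(* Let $\mathcal{F}\subset\mathbb{R}^d$ be a convex feasible set with bounded diameter $D_\infty$, i.e. $\|x-y\|_\infty\le D_\infty$ for all $x,y\in\mathcal{F}$. Let $f_1,\dots,f_T:\mathbb{R}^d\to\mathbb{R}$ be convex differentiable functions, and let $\theta^*\in\arg\min_{\theta\in\mathcal{F}}\sum_{t=1}^T f_t(\theta)$. Consider the AdaBelief iteration (without bias correction): starting from $\theta_1\in\mathcal{F}$, $m_0=0$, $s_0=0$, for $t=1,\dots,T$, $$g_t=\nabla f_t(\theta_t),\quad m_t=\beta_{1t}m_{t-1}+(1-\beta_{1t})g_t,\quad s_t=\beta_2 s_{t-1}+(1-\beta_2)(g_t-m_t)^2,$$ $$\theta_{t+1}=\Pi_{\mathcal{F},\sqrt{s_t}}\big(\theta_t-\alpha_t s_t^{-1/2}m_t\big),$$ with elementwise operations, $\Pi_{\mathcal{F},M}(y)=\arg\min_{x\in\mathcal{F}}\|M^{1/2}(x-y)\|$, and any small constant $\epsilon$ absorbed into $s_t$. Assume $0\le\beta_2<1$, $0\le\beta_1<1$, $\alpha_t=\alpha/\sqrt{t}$ with $\alpha>0$, $\beta_{1t}=\beta_1\lambda^t$ with $0<\lambda<1$, and $s_t\le s_{t+1}$ (elementwise) for all $t\in[T]$. Assume $\|g_t\|_\infty\le G_\infty/2$ (hence $\|g_t-m_t\|_\infty\le G_\infty$) and $s_{t,i}\ge c>0$ for all $t\in[T]$, $i\in[d]$. Then $$\sum_{t=1}^T[f_t(\theta_t)-f_t(\theta^* )]\le \frac{D_\infty^2\sqrt{T}}{2\alpha(1-\beta_1)}\sum_{i=1}^d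 s_{T,i}^{1/2}+\frac{(1+\beta_1)\alpha\sqrt{1+\log T}}{2\sqrt{c}(1-\beta_1)^3}\sum_{i=1}^d\big\|g_{1:T,i}^2\big\|_2+\frac{D_\infty^2\beta_1G_\infty}{2(1-\beta_1)(1-\lambda)^2\alpha}.$$
   Context: $g_{t,i}$ and $s_{t,i}$ denote the $i$-th coordinates of $g_t$ and $s_t$; $g_{1:T,i}^2$ denotes the vector $(g_{1,i}^2,\dots,g_{T,i}^2)\in\mathbb{R}^T$, and $\|\cdot\|_2$ is the Euclidean norm. *)

(* Defs.v *)
From HB Require Import structures.
From mathcomp Require Import all_boot all_order all_algebra.
From mathcomp Require Import all_classical all_reals all_analysis.
Set Implicit Arguments. Unset Strict Implicit. Unset Printing Implicit Defensive.
Import Order.TTheory GRing.Theory Num.Theory.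
Import numFieldNormedType.Exports.
Local Open Scope classical_set_scope.
Local Open Scope ring_scope.

Section Defs.
Variables (R : realType) (d : nat).
Local Notation V := 'rV[R]_d.

Definition basis_vec (i : 'I_d) : V := delta_mx ord0 i.

Definition grad (f : V -> R) (x : V) : V := \row_i ('D_(basis_vec i) f x).

Definition linf (v : V) : R := \big[Num.max/0]_(i < d) `|v ord0 i|.

Definition sqv (v : V) : V := map_mx (fun a => a ^+ 2) v.

Definition wnorm (w v : V) : R :=
  Num.sqrt (\sum_(i < d) Num.sqrt (w ord0 i) * (v ord0 i) ^+ 2).

Definition invsqrt_mul (s m : V) : V := \row_i (m ord0 i / Num.sqrt (s ord0 i)).

Definition convex_fun (f : V -> R) : Prop :=
  forall x y a, 0 <= a <= 1 -> f (a *: x + (1 - a) *: y) <= a * f x + (1 - a) * f y.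

End Defs.

(* Main.v *)
Require Import Defs.
From HB Require Import structures.
From mathcomp Require Import all_boot all_order all_algebra.
From mathcomp Require Import all_classical all_reals all_analysis.
From mathcomp Require Import ring lra.
Import Order.TTheory GRing.Theory Num.Theory.
Import numFieldNormedType.Exports.
Local Open Scope classical_set_scope.
Local Open Scope ring_scope.

Lemma conv_step (R : realType) (d : nat) (f : 'rV[R]_d -> R) (x y : 'rV[R]_d) (h : R) :
  convex_function setT f -> 0 < h -> h < 1 ->
  f (h *: (y - x) + x) <= h * f y + (1 - h) * f x.
Proof.
move=> cf h0 h1.
have := cf (Itv01 (ltW h0) (ltW h1)) y x.
rewrite !inE /= => /(_ I I).
have -> : h *: (y - x) + x = h *: y + (1 - h) *: x.
  by rewrite scalerBr scalerBl scale1r addrCA addrC.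
by [].
Qed.

Lemma grad_ineq (R : realType) (d : nat) (f : 'rV[R]_d -> R) (x y : 'rV[R]_d) :
  convex_function setT f -> differentiable f x ->
  \sum_(i < d) grad f x ord0 i * (y - x) ord0 i <= f y - f x.
Proof.
move=> cf df.
have dv := @diff_derivable _ _ _ f x (y - x) df.
have E : 'D_(y - x) f x = \sum_(i < d) grad f x ord0 i * (y - x) ord0 i.
  rewrite deriveE // {1}[y - x]row_sum_delta linear_sum /=.
  apply: eq_bigr => i _; rewrite linearZ /= -deriveE // /grad !mxE mulrC.
  by [].
rewrite -E /derive cvg_at_rightE //.
apply: limr_le; first exact: (cvgP _ (cvg_dnbhs_at_right dv)).
near=> h.
have h0 : 0 < h by near: h; exact: nbhs_right_gt.
have h1 : h < 1 by near: h; exact: nbhs_right_lt.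
rewrite /= -[h^-1 *: _]/(h^-1 * _).
rewrite ler_pdivrMl //.
have := @conv_step _ _ f x y h cf h0 h1.
set z := f _; move=> hz.
by rewrite mulrBr; lra.
Unshelve. all: by end_near.
Qed.

Lemma vi_aux (R : realType) (A B : R) : 0 <= B ->
  (forall t, 0 < t -> t < 1 -> 0 <= 2 * t * A + t ^+ 2 * B) -> 0 <= A.
Proof.
move=> B0 H; rewrite leNgt; apply/negP => A0.
set t := - A / (B - 2 * A).
have D0 : 0 < B - 2 * A by lra.
have t0 : 0 < t by rewrite /t divr_gt0 //; lra.
have t1 : t < 1 by rewrite /t ltr_pdivrMr //; lra.
have := H t t0 t1.
have -> : 2 * t * A + t ^+ 2 * B = t * (A * (B - 4 * A) / (B - 2 * A)).
  rewrite /t; field; lra.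
rewrite pmulr_rge0 // => h.
have : A * (B - 4 * A) / (B - 2 * A) < 0.
  rewrite pmulr_llt0 ?invr_gt0 //; nra.
lra.
Qed.

Lemma proj_vi (R : realType) (d : nat) (F : set 'rV[R]_d) (s p y : 'rV[R]_d) :
  convex_set F -> F p ->
  (forall x, F x -> wnorm s (p - y) <= wnorm s (x - y)) ->
  forall z, F z ->
  0 <= \sum_(i < d) Num.sqrt (s ord0 i) * (p ord0 i - y ord0 i) * (z ord0 i - p ord0 i).
Proof.
move=> cF Fp Hmin z Fz.
apply: (@vi_aux _ _ (\sum_(i < d) Num.sqrt (s ord0 i) * (z ord0 i - p ord0 i) ^+ 2)).
  by apply: sumr_ge0 => i _; rewrite mulr_ge0 // sqr_ge0.
move=> t t0 t1.
have Fz' : F (t *: z + (1 - t) *: p).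
  have := cF z p (Itv01 (ltW t0) (ltW t1)).
  rewrite !inE => /(_ Fz Fp).
  by [].
have := Hmin _ Fz'.
rewrite /wnorm ler_sqrt; last first.
  by apply: sumr_ge0 => i _; rewrite mulr_ge0 // sqr_ge0.
have -> : \sum_(i < d) Num.sqrt (s ord0 i) * (t *: z + (1 - t) *: p - y) ord0 i ^+ 2
   = \sum_(i < d) Num.sqrt (s ord0 i) * (p - y) ord0 i ^+ 2
     + 2 * t * \sum_(i < d) Num.sqrt (s ord0 i) * (p ord0 i - y ord0 i) * (z ord0 i - p ord0 i)
     + t ^+ 2 * \sum_(i < d) Num.sqrt (s ord0 i) * (z ord0 i - p ord0 i) ^+ 2.
  rewrite !mulr_sumr -!big_split /=; apply: eq_bigr => i _; rewrite !mxE; ring.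
lra.
Qed.

Lemma proj_bound1 (R : realType) (d : nat) (w e f : 'I_d -> R) :
  (forall i, 0 <= w i) -> 0 <= \sum_(i < d) w i * (e i - f i) * (- e i) ->
  \sum_(i < d) w i * e i ^+ 2 <= \sum_(i < d) w i * f i ^+ 2.
Proof.
move=> w0 H.
have E : \sum_(i < d) w i * f i ^+ 2 - \sum_(i < d) w i * e i ^+ 2 =
  \sum_(i < d) w i * (f i - e i) ^+ 2 + 2 * \sum_(i < d) w i * (e i - f i) * (- e i).
  rewrite mulr_sumr -sumrB -big_split /=; apply: eq_bigr => i _; ring.
have : 0 <= \sum_(i < d) w i * (f i - e i) ^+ 2.
  by apply: sumr_ge0 => i _; rewrite mulr_ge0 // sqr_ge0.
lra.
Qed.

Lemma proj_bound2 (R : realType) (d : nat) (w m dl : 'I_d -> R) (a : R) :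
  (forall i, 0 < w i) -> 0 < a ->
  0 <= \sum_(i < d) w i * (dl i + a * (m i / w i)) * (- dl i) ->
  - (a * \sum_(i < d) m i ^+ 2 / w i) <= \sum_(i < d) m i * dl i.
Proof.
move=> w0 a0 H.
set S := \sum_(i < d) m i * dl i.
set P := \sum_(i < d) m i ^+ 2 / w i.
set Q := \sum_(i < d) w i * dl i ^+ 2.
have HQ : Q <= - (a * S).
  have E : \sum_(i < d) w i * (dl i + a * (m i / w i)) * (- dl i) = - Q - a * S.
    rewrite /Q /S mulr_sumr -sumrN -sumrB; apply: eq_bigr => i _.
    have := w0 i => wi; field; lra.
  rewrite E in H; lra.
have HA : - S <= a * P / 2 + Q / (2 * a).
  have E : a * P / 2 + Q / (2 * a) + S =
     \sum_(i < d) w i / (2 * a) * (a * m i / w i + dl i) ^+ 2.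
    rewrite /P /Q /S mulr_sumr !mulr_suml -!big_split /=; apply: eq_bigr => i _.
    have := w0 i => wi; field; lra.
  have : 0 <= \sum_(i < d) w i / (2 * a) * (a * m i / w i + dl i) ^+ 2.
    apply: sumr_ge0 => i _; rewrite mulr_ge0 ?sqr_ge0 // divr_ge0 //; [exact: ltW | lra].
  rewrite -E; lra.
have : Q / (2 * a) <= - S / 2.
  rewrite ler_pdivrMr; last lra.
  have -> : - S / 2 * (2 * a) = - (a * S) by field.
  done.
lra.
Qed.

Lemma harm_ln (R : realType) (T : nat) : (0 < T)%N ->
  \sum_(1 <= t < T.+1) (t%:R : R)^-1 <= 1 + ln (T%:R : R).
Proof.
case: T => // T _; elim: T => [|T IH].
  by rewrite big_nat1 invr1 ln1 addr0.
rewrite big_nat_recr //=.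
suff H : ((T.+2)%:R : R)^-1 <= ln (T.+2)%:R - ln (T.+1)%:R.
  move: IH H; set A := \sum_(1 <= t < T.+2) _; set B := ln _; set C := ln _; set D := _^-1; lra.
have -> : ((T.+2)%:R : R) = (T.+1)%:R + 1 by rewrite -natr1.
set n : R := (T.+1)%:R.
have hn : 0 < n by rewrite /n ltr0n.
have := @le_ln1Dx R (- (n + 1)^-1).
have -> : 1 + - (n + 1)^-1 = n / (n + 1) by field; lra.
rewrite lnM ?posrE ?invr_gt0 //; last lra.
rewrite lnV ?posrE //; last lra.
have : 0 < (n + 1)^-1 by rewrite invr_gt0; lra.
have : (n + 1)^-1 < 1 by rewrite invf_lt1; lra.
move=> h1 h2 H; have : -1 < - (n + 1)^-1 by lra.
move=> /H; set u := (n + 1)^-1; set v := ln n; set w := ln (n + 1); lra.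
Qed.

Lemma cs_aux (R : realType) (n : nat) (x y : 'I_n -> R) (Y : R) :
  0 < Y -> \sum_(i < n) y i ^+ 2 <= Y ->
  \sum_(i < n) x i * y i <= Num.sqrt (\sum_(i < n) x i ^+ 2) * Num.sqrt Y.
Proof.
move=> Y0 HY.
set X := \sum_(i < n) x i ^+ 2.
have X0 : 0 <= X by apply: sumr_ge0 => i _; exact: sqr_ge0.
have key : forall k, 0 < k -> \sum_(i < n) x i * y i <= (k * X + Y / k) / 2.
  move=> k k0.
  have : \sum_(i < n) x i * y i <= \sum_(i < n) (k * x i ^+ 2 + y i ^+ 2 / k) / 2.
    apply: ler_sum => i _.
    have : 0 <= (k * x i - y i) ^+ 2 / k by rewrite divr_ge0 ?sqr_ge0 //; exact: ltW.
    have -> : (k * x i - y i) ^+ 2 / k = k * x i ^+ 2 + y i ^+ 2 / k - 2 * (x i * y i).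
      by field; lra.
    lra.
  rewrite -mulr_suml big_split /= -mulr_sumr -mulr_suml => h.
  apply: (le_trans h); rewrite ler_pdivrMr // divfK; last lra.
  rewrite lerD2l ler_pdivlMr // mulfVK; last lra.
  by [].
have [X00|Xp] := eqVneq X 0.
  have x0 : forall i, x i = 0.
    move=> i; have /psumr_eq0P H := X00.
    by apply/eqP; rewrite -sqrf_eq0; apply/eqP; apply: H => // j _; exact: sqr_ge0.
  rewrite big1 ?mulr_ge0 ?sqrtr_ge0 // => i _; by rewrite x0 mul0r.
have Xp' : 0 < X by rewrite lt_def Xp X0.
have sX : 0 < Num.sqrt X by rewrite sqrtr_gt0.
have sY : 0 < Num.sqrt Y by rewrite sqrtr_gt0.
have := key (Num.sqrt Y / Num.sqrt X) (divr_gt0 sY sX).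
have -> : (Num.sqrt Y / Num.sqrt X * X + Y / (Num.sqrt Y / Num.sqrt X)) / 2
        = Num.sqrt X * Num.sqrt Y.
  have eX : X = Num.sqrt X ^+ 2 by rewrite sqr_sqrtr.
  have eY : Y = Num.sqrt Y ^+ 2 by rewrite sqr_sqrtr // ltW.
  rewrite {2}eX {2}eY; field; lra.
done.
Qed.

Lemma shift_sum (R : realType) (T : nat) (F : nat -> R) :
  F 0%N = 0 -> (forall t, 0 <= F t) ->
  \sum_(1 <= t < T.+1) F t.-1 <= \sum_(1 <= t < T.+1) F t.
Proof.
move=> F0 Fge.
rewrite [X in X <= _]big_add1 /=.
case: T => [|T]; first by rewrite !big_geq.
rewrite big_ltn // F0 add0r [X in _ <= X]big_nat_recr //= lerDl.
exact: Fge.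
Qed.

Lemma mom_sq (R : realType) (T : nat) (M G2 : nat -> R) (b : R) :
  0 <= b < 1 -> M 0%N = 0 -> (forall t, 0 <= M t) ->
  (forall t, (1 <= t <= T)%N -> M t <= b * M t.-1 + G2 t) ->
  \sum_(1 <= t < T.+1) M t / Num.sqrt (t%:R) <=
    (1 - b)^-1 * \sum_(1 <= t < T.+1) G2 t / Num.sqrt (t%:R).
Proof.
move=> /andP [b0 b1] M0 Mge HM.
set S := \sum_(1 <= t < T.+1) M t / Num.sqrt (t%:R).
set Gs := \sum_(1 <= t < T.+1) G2 t / Num.sqrt (t%:R).
have H1 : S <= b * \sum_(1 <= t < T.+1) M t.-1 / Num.sqrt (t%:R) + Gs.
  rewrite /Gs mulr_sumr -big_split /=.
  apply: ler_sum_nat => t /andP [t1 tT].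
  have st : 0 < Num.sqrt (t%:R : R) by rewrite sqrtr_gt0 ltr0n.
  rewrite mulrA -mulrDl ler_pM2r ?invr_gt0 //.
  by apply: HM; rewrite t1 -ltnS.
have H2 : \sum_(1 <= t < T.+1) M t.-1 / Num.sqrt (t%:R) <= S.
  apply: le_trans (@shift_sum R T (fun t => M t / Num.sqrt t%:R) _ _).
  - apply: ler_sum_nat => t /andP [t1 tT].
    case: t t1 tT => // -[|t] _ _ /=; first by rewrite M0 !mul0r.
    apply: ler_wpM2l => //.
    rewrite lef_pV2 ?posrE ?sqrtr_gt0 ?ltr0n // ler_sqrt ?ler_nat //.
  - by rewrite /= M0 mul0r.
  - by move=> t; rewrite divr_ge0 ?sqrtr_ge0.
have Gs0 : 0 <= S by apply: sumr_ge0 => t _; rewrite divr_ge0 ?sqrtr_ge0.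
rewrite -/S -/Gs ler_pdivlMl; last lra.
nra.
Qed.

Lemma assemble (R : realType) (T : nat) (E u v Q aP bt : nat -> R) (K beta1 : R) :
  (0 < T)%N -> 0 <= beta1 < 1 ->
  (forall t, 0 <= bt t <= beta1) ->
  (forall t, (bt t.+1 <= bt t)) ->
  (forall t, (1 <= t <= T)%N -> (1 - bt t) * E t = u t - bt t * v t) ->
  (forall t, (1 <= t <= T)%N -> u t.-1 - aP t.-1 <= v t) ->
  (forall t, (1 <= t <= T)%N -> u t <= Q t + aP t / 2) ->
  (forall t, (1 <= t <= T)%N -> Q t <= K) ->
  \sum_(1 <= t < T.+1) Q t <= K -> 0 <= K ->
  u 0%N = 0 -> aP 0%N = 0 -> (forall t, 0 <= aP t) ->
  \sum_(1 <= t < T.+1) E t <=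
    (1 + beta1 / (1 - beta1)) * K
    + ((1 + beta1 / (1 - beta1)) / 2 + beta1 / (1 - beta1)) * \sum_(1 <= t < T.+1) aP t.
Proof.
move=> T0 /andP [b10 b11] hbt hbdec H1 H2 H3 H4 H5 K0 u0 aP0 aPge.
set bnd := beta1 / (1 - beta1).
pose bb t := if (t <= T)%N then bt t / (1 - bt t) else 0.
have bbge : forall t, 0 <= bb t <= bnd.
  move=> t; rewrite /bb; case: ifP => _; last by rewrite lexx divr_ge0 //; lra.
  have := hbt t => /andP [h0 h1].
  apply/andP; split; first by rewrite divr_ge0 //; lra.
  rewrite ler_pdivrMr; last lra.
  rewrite mulrAC ler_pdivlMr; last lra.
  nra.
have bbdec : forall t, (1 <= t <= T)%N -> bb t.+1 <= bb t.
  move=> t /andP [t1 tT]; rewrite /bb tT; case: ifP => _; last first.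
    have := hbt t => /andP [h0 h1]; rewrite divr_ge0 //; lra.
  have := hbt t => /andP [h0 h1]; have := hbt t.+1 => /andP [h0' h1'].
  have := hbdec t => hd.
  rewrite ler_pdivrMr; last lra.
  rewrite mulrAC ler_pdivlMr; last lra.
  nra.
pose dl t := bb t - bb t.+1.
have step : forall t, (1 <= t <= T)%N ->
  E t <= (bb t.+1 * u t - bb t * u t.-1) + (Q t + dl t * K + (1 + bnd) / 2 * aP t
         + bnd * aP t.-1).
  move=> t tT.
  have := hbt t => /andP [h0 h1].
  have bbt : bb t = bt t / (1 - bt t) by rewrite /bb; case/andP: tT => _ ->.
  have eE : E t = (1 + bb t) * u t - bb t * v t.
    have := H1 t tT; rewrite bbt => h.
    apply: (@mulfI _ (1 - bt t)); first by apply/eqP; lra.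
    rewrite h; field; lra.
  have := H2 t tT; have := H3 t tT; have := H4 t tT; have := bbdec t tT.
  have := bbge t; have := bbge t.+1; have := aPge t; have := aPge t.-1.
  rewrite eE /dl.
  move: (bb t) (bb t.+1) (u t) (u t.-1) (v t) (aP t) (aP t.-1) (Q t) => B B' ut ut' vt p p' q.
  move=> hp' hp /andP [hB'0 hB'1] /andP [hB0 hB1] hBB' hq hu hv.
  nra.
have S1 : \sum_(1 <= t < T.+1) E t <= \sum_(1 <= t < T.+1)
   ((bb t.+1 * u t - bb t * u t.-1) + (Q t + dl t * K + (1 + bnd) / 2 * aP t
         + bnd * aP t.-1)).
  by apply: ler_sum_nat => t tT; apply: step; rewrite -ltnS.
apply: (le_trans S1); rewrite big_split /=.
have tel1 : \sum_(1 <= t < T.+1) dl t * K = (bb 1%N - bb T.+1) * K.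
  rewrite -mulr_suml; congr (_ * _).
  rewrite (@telescope_sumr_eq _ 1 T.+1 (fun t => - bb t)) //; first by rewrite opprK addrC.
  by move=> k _; rewrite /dl opprK addrC.
have tel2 : \sum_(1 <= t < T.+1) (bb t.+1 * u t - bb t * u t.-1) = bb T.+1 * u T - bb 1%N * u 0%N.
  by rewrite (@telescope_sumr_eq _ 1 T.+1 (fun t => bb t * u t.-1)).
have bbT : bb T.+1 = 0 by rewrite /bb ltnn.
rewrite tel2 !big_split /= tel1 bbT u0 !mul0r mulr0 subr0 add0r.
have sh : \sum_(1 <= t < T.+1) bnd * aP t.-1 <= bnd * \sum_(1 <= t < T.+1) aP t.
  rewrite -mulr_sumr; apply: ler_wpM2l; first by rewrite divr_ge0 //; lra.
  exact: (@shift_sum R T aP aP0 aPge).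
rewrite -mulr_sumr.
have := bbge 1%N => /andP [hb0 hb1].
have hbnd : 0 <= bnd by rewrite divr_ge0 //; lra.
set SQ := \sum_(1 <= t < T.+1) Q t.
set SA := \sum_(1 <= t < T.+1) aP t.
set SB := \sum_(1 <= t < T.+1) bnd * aP t.-1.
have SA0 : 0 <= SA by apply: sumr_ge0.
have : bb 1%N * K <= bnd * K by apply: ler_wpM2r.
move: H5 sh; rewrite -/SQ -/SB -/SA subr0; lra.
Qed.

Lemma tele_w (R : realType) (T : nat) (c X : nat -> R) (D2 : R) : (0 < T)%N ->
  (forall t, (1 <= t <= T)%N -> 0 <= c t) ->
  (forall t, (1 <= t < T)%N -> c t <= c t.+1) ->
  (forall t, (1 <= t <= T.+1)%N -> 0 <= X t <= D2) ->
  \sum_(1 <= t < T.+1) c t * (X t - X t.+1) <= c T * D2.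
Proof.
move=> T0 c0 cinc X0.
suff H : forall n, (1 <= n <= T)%N ->
  \sum_(1 <= t < n.+1) c t * (X t - X t.+1) <= c n * D2 - c n * X n.+1.
  apply: (le_trans (H T _)); first by rewrite T0 leqnn.
  have := c0 T; rewrite T0 leqnn => /(_ isT) hc.
  have := X0 T.+1; rewrite leqnn => /(_ isT) /andP [hx _].
  rewrite lerBlDr lerDl; exact: mulr_ge0.
elim=> [//|n IH] /andP [_ nT].
case: n IH nT => [|n] IH nT.
  rewrite big_nat1.
  have := c0 1%N; rewrite nT => /(_ isT) hc.
  have := X0 1%N => /(_ isT) /andP [_ hx].
  have : c 1%N * X 1%N <= c 1%N * D2 by apply: ler_wpM2l.
  lra.
rewrite big_nat_recr //=.
have IH' := IH (ltnW nT).
have := cinc n.+1; rewrite nT => /(_ isT) hc.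
have := X0 n.+2; rewrite ltnW ?ltnS ?(ltnW nT) // => /(_ isT) /andP [hx0 hx1].
have : c n.+1 * (D2 - X n.+2) <= c n.+2 * (D2 - X n.+2).
  by apply: ler_wpM2r => //; lra.
move: IH'; set A := \sum_(1 <= t < n.+2) _.
set a := c n.+1; set b := c n.+2; set y := X n.+2; set z := X n.+3.
move=> *; nra.
Qed.

Lemma cs_nat (R : realType) (T : nat) (x y : nat -> R) (Y : R) :
  0 < Y -> \sum_(1 <= t < T.+1) y t ^+ 2 <= Y ->
  \sum_(1 <= t < T.+1) x t * y t <= Num.sqrt (\sum_(1 <= t < T.+1) x t ^+ 2) * Num.sqrt Y.
Proof.
move=> Y0; rewrite !big_add1 /= !big_mkord => HY.
exact: (@cs_aux R T (fun i => x i.+1) (fun i => y i.+1) Y Y0 HY).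
Qed.


Theorem corollary2p1 (R : realType) (d T : nat) (F : set 'rV[R]_d)
    (Dinf Ginf alpha beta1 beta2 lambda c eps : R)
    (f : nat -> 'rV[R]_d -> R) (theta m s : nat -> 'rV[R]_d)
    (thetastar : 'rV[R]_d) :
  (0 < T)%N ->
  convex_set F ->
  (forall x y, F x -> F y -> linf (x - y) <= Dinf) ->
  (forall t, (1 <= t <= T)%N ->
     convex_function setT (f t) /\ (forall x, differentiable (f t) x)) ->
  F thetastar ->
  (forall x, F x ->
     \sum_(1 <= t < T.+1) f t thetastar <= \sum_(1 <= t < T.+1) f t x) ->
  0 <= beta2 < 1 -> 0 <= beta1 < 1 -> 0 < alpha -> 0 < lambda < 1 ->
  0 <= eps ->
  F (theta 1%N) -> m 0%N = 0 -> s 0%N = 0 ->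
  (forall t, (1 <= t <= T)%N ->
     m t = (beta1 * lambda ^+ t) *: m t.-1
           + (1 - beta1 * lambda ^+ t) *: grad (f t) (theta t)) ->
  (forall t, (1 <= t <= T)%N ->
     s t = beta2 *: s t.-1 + (1 - beta2) *: sqv (grad (f t) (theta t) - m t)
           + const_mx eps) ->
  (forall t, (1 <= t <= T)%N ->
     let y := theta t - (alpha / Num.sqrt t%:R) *: invsqrt_mul (s t) (m t) in
     F (theta t.+1) /\
     (forall x, F x -> wnorm (s t) (theta t.+1 - y) <= wnorm (s t) (x - y))) ->
  (forall t, (1 <= t <= T)%N -> forall i, s t ord0 i <= s t.+1 ord0 i) ->
  (forall t, (1 <= t <= T)%N -> linf (grad (f t) (theta t)) <= Ginf / 2) ->
  0 < c ->
  (forall t, (1 <= t <= T)%N -> forall i, c <= s t ord0 i) ->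
  \sum_(1 <= t < T.+1) (f t (theta t) - f t thetastar) <=
    Dinf ^+ 2 * Num.sqrt T%:R / (2 * alpha * (1 - beta1))
      * \sum_(i < d) Num.sqrt (s T ord0 i)
  + (1 + beta1) * alpha * Num.sqrt (1 + ln T%:R)
      / (2 * Num.sqrt c * (1 - beta1) ^+ 3)
      * \sum_(i < d)
          Num.sqrt (\sum_(1 <= t < T.+1) ((grad (f t) (theta t)) ord0 i ^+ 2) ^+ 2)
  + Dinf ^+ 2 * beta1 * Ginf / (2 * (1 - beta1) * (1 - lambda) ^+ 2 * alpha).
Proof.
move=> T0 cF Hdiam Hf Fstar Hmin /andP [b20 b21] /andP [b10 b11] a0 /andP [l0 l1]
  eps0 F1 m0 s0 Hm Hs Hproj Hsinc Hg c0 Hc.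
pose w t i := Num.sqrt (s t ord0 i).
pose a t : R := alpha / Num.sqrt (t%:R).
pose bt t := beta1 * lambda ^+ t.
pose gr t := grad (f t) (theta t).
pose xs t i := theta t ord0 i - thetastar ord0 i.
pose u t := \sum_(i < d) m t ord0 i * xs t i.
pose v t := \sum_(i < d) m t.-1 ord0 i * xs t i.
pose P t := \sum_(i < d) m t ord0 i ^+ 2 / w t i.
pose E t := \sum_(i < d) gr t ord0 i * xs t i.
pose Q t := \sum_(i < d) Num.sqrt (t%:R) / (2 * alpha) * (w t i * (xs t i ^+ 2 - xs t.+1 i ^+ 2)).
pose K := \sum_(i < d) Num.sqrt (T%:R) / (2 * alpha) * w T i * Dinf ^+ 2.
pose aP t := a t * P t.
have sc0 : 0 < Num.sqrt c by rewrite sqrtr_gt0.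
have wc : forall t i, (1 <= t <= T)%N -> Num.sqrt c <= w t i.
  by move=> t i tT; rewrite /w ler_sqrt; [exact: Hc | exact: (le_trans (ltW c0) (Hc t tT i))].
have wpos : forall t i, (1 <= t <= T)%N -> 0 < w t i.
  by move=> t i tT; apply: lt_le_trans (wc t i tT).
have wge : forall t i, 0 <= w t i by move=> t i; exact: sqrtr_ge0.
have winc : forall t i, (1 <= t < T)%N -> w t i <= w t.+1 i.
  move=> t i /andP [t1 tT]; rewrite /w ler_sqrt; first by apply: Hsinc; rewrite t1 ltnW.
  by apply: le_trans (ltW c0) (Hc t.+1 _ i); rewrite tT.
have wT : forall t i, (1 <= t <= T)%N -> w t i <= w T i.
  move=> t i /andP [t1 tT].
  suff H : forall k, (t + k <= T)%N -> w t i <= w (t + k)%N i.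
    by have := H (T - t)%N; rewrite subnKC // => /(_ (leqnn T)).
  elim=> [|k IH] hk; first by rewrite addn0.
  rewrite addnS in hk *.
  apply: (le_trans (IH (ltnW hk))); apply: winc.
  by rewrite hk andbT (leq_trans t1) // leq_addr.
have FT : forall t, (1 <= t <= T.+1)%N -> F (theta t).
  move=> [|[|t]] // /andP [_ tT]; by case: (Hproj t.+1 _); first by rewrite ltnS.
have xD : forall t i, (1 <= t <= T.+1)%N -> 0 <= xs t i ^+ 2 <= Dinf ^+ 2.
  move=> t i tT; have := Hdiam _ _ (FT t tT) Fstar => hd.
  have hx : `|xs t i| <= Dinf.
    apply: le_trans hd; rewrite /linf /xs.
    have -> : theta t ord0 i - thetastar ord0 i = (theta t - thetastar) ord0 i by rewrite !mxE.
    exact: (le_bigmax 0 (fun j => `|(theta t - thetastar) ord0 j|) i).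
  move: hx; rewrite ler_norml => /andP [h1 h2].
  by rewrite sqr_ge0 /=; nra.
have at0 : forall t, 0 <= a t by move=> t; rewrite divr_ge0 ?sqrtr_ge0 // ltW.
have aP0 : forall t, 0 <= aP t.
  by move=> t; rewrite mulr_ge0 // sumr_ge0 // => i _; rewrite divr_ge0 ?sqr_ge0.
have u0 : u 0%N = 0 by rewrite /u m0 big1 // => i _; rewrite mxE mul0r.
have aPz : aP 0%N = 0 by rewrite /aP /P m0 big1 ?mulr0 // => i _; rewrite mxE expr0n mul0r.
have HE : forall t, (1 <= t <= T)%N -> f t (theta t) - f t thetastar <= E t.
  move=> t tT; have [cf df] := Hf t tT.
  have := @grad_ineq R d (f t) (theta t) thetastar cf (df _).
  have -> : \sum_(i < d) grad (f t) (theta t) ord0 i * (thetastar - theta t) ord0 i = - E t.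
    rewrite /E -sumrN; apply: eq_bigr => i _; rewrite /gr /xs !mxE; ring.
  lra.
have H1 : forall t, (1 <= t <= T)%N -> (1 - bt t) * E t = u t - bt t * v t.
  move=> t tT.
  have -> : u t = bt t * v t + (1 - bt t) * E t.
    rewrite /u /v /E (Hm t tT) !mulr_sumr -big_split /=; apply: eq_bigr => i _.
    rewrite !mxE /bt /gr; ring.
  ring.
have H2 : forall t, (1 <= t <= T)%N -> u t.-1 - aP t.-1 <= v t.
  move=> [|[|k]] tT //.
    rewrite /= u0 aPz subr0 /v /= m0 big1 // => i _; by rewrite mxE mul0r.
  have kT : (1 <= k.+1 <= T)%N by rewrite /= ltnW.
  case: (Hproj k.+1 kT) => Fk1 Hk.
  have VI := @proj_vi R d F (s k.+1) (theta k.+2) _ cF Fk1 Hk _ (FT k.+1 (ltnW kT)).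
  have ak : 0 < a k.+1 by rewrite divr_gt0 // sqrtr_gt0 ltr0n.
  have := @proj_bound2 R d (w k.+1) (fun i => m k.+1 ord0 i)
     (fun i => theta k.+2 ord0 i - theta k.+1 ord0 i) (a k.+1) (fun i => wpos _ i kT) ak.
  have -> : \sum_(i < d) w k.+1 i * (theta k.+2 ord0 i - theta k.+1 ord0 i
        + a k.+1 * (m k.+1 ord0 i / w k.+1 i)) * - (theta k.+2 ord0 i - theta k.+1 ord0 i) =
     \sum_(i < d) Num.sqrt (s k.+1 ord0 i) *
        (theta k.+2 ord0 i - (theta k.+1 - (alpha / Num.sqrt k.+1%:R) *: invsqrt_mul (s k.+1) (m k.+1)) ord0 i) *
        (theta k.+1 ord0 i - theta k.+2 ord0 i).
    apply: eq_bigr => i _; rewrite /invsqrt_mul /w /a !mxE; ring.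
  move=> /(_ VI) hb.
  have -> : v k.+2 = u k.+1 + \sum_(i < d) m k.+1 ord0 i * (theta k.+2 ord0 i - theta k.+1 ord0 i).
    rewrite /v /u -big_split /=; apply: eq_bigr => i _; rewrite /xs; ring.
  rewrite /= /aP /P; lra.
have H3 : forall t, (1 <= t <= T)%N -> u t <= Q t + aP t / 2.
  move=> t tT.
  case: (Hproj t tT) => Ft1 Ht.
  have VI := @proj_vi R d F (s t) (theta t.+1) _ cF Ft1 Ht _ Fstar.
  have att : 0 < a t by rewrite divr_gt0 // sqrtr_gt0 ltr0n; case/andP: tT.
  have st : 0 < Num.sqrt (t%:R : R) by rewrite sqrtr_gt0 ltr0n; case/andP: tT.
  have := @proj_bound1 R d (w t) (fun i => xs t.+1 i)
     (fun i => xs t i - a t * (m t ord0 i / w t i)) (fun i => wge t i).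
  have -> : \sum_(i < d) w t i * (xs t.+1 i - (xs t i - a t * (m t ord0 i / w t i))) * - xs t.+1 i =
     \sum_(i < d) Num.sqrt (s t ord0 i) *
        (theta t.+1 ord0 i - (theta t - (alpha / Num.sqrt t%:R) *: invsqrt_mul (s t) (m t)) ord0 i) *
        (thetastar ord0 i - theta t.+1 ord0 i).
    apply: eq_bigr => i _; rewrite /invsqrt_mul /w /a /xs !mxE; ring.
  move=> /(_ VI) hb.
  have ef : \sum_(i < d) w t i * (xs t i - a t * (m t ord0 i / w t i)) ^+ 2 =
     \sum_(i < d) w t i * xs t i ^+ 2 - 2 * a t * u t + a t ^+ 2 * P t.
    rewrite /u /P !mulr_sumr -sumrB -big_split /=; apply: eq_bigr => i _.
    have := wpos t i tT => wi; field; lra.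
  rewrite ef in hb.
  have Qe : Q t = (\sum_(i < d) w t i * xs t i ^+ 2 - \sum_(i < d) w t i * xs t.+1 i ^+ 2) / (2 * a t).
    rewrite /Q -sumrB mulr_suml; apply: eq_bigr => i _; rewrite /a; field.
    by apply/andP; split; apply/eqP; lra.
  rewrite Qe /aP.
  move: hb; set Z := \sum_(i < d) w t i * xs t i ^+ 2; set Z1 := \sum_(i < d) _ => hb.
  have -> : (Z - Z1) / (2 * a t) + a t * P t / 2 = u t + (Z - Z1 - 2 * a t * u t + a t ^+ 2 * P t) / (2 * a t).
    by field; lra.
  rewrite lerDl divr_ge0 //; first lra.
  lra.
have ha2 : 0 < 2 * alpha by lra.
have cmono : forall t, (1 <= t <= T)%N -> Num.sqrt (t%:R : R) / (2 * alpha) <= Num.sqrt (T%:R) / (2 * alpha).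
  move=> t /andP [_ tT]; rewrite ler_pM2r ?invr_gt0 // ler_sqrt ?ler_nat //.
have H4 : forall t, (1 <= t <= T)%N -> Q t <= K.
  move=> t tT; apply: ler_sum => i _.
  case/andP: (tT) => t1 tT'.
  have /andP [hx0 hx1] := xD t i (introT andP (conj t1 (leq_trans tT' (leqnSn T)))).
  have /andP [hy0 hy1] := xD t.+1 i (introT andP (conj (isT : (0 < t.+1)%N) tT')).
  have hc := cmono t tT.
  have hc0 : 0 <= Num.sqrt (t%:R : R) / (2 * alpha) by rewrite divr_ge0 ?sqrtr_ge0 // ltW.
  have hw := wT t i tT; have hw0 := wge t i.
  apply: (@le_trans _ _ (Num.sqrt (t%:R : R) / (2 * alpha) * (w t i * xs t i ^+ 2))).
    by apply: ler_wpM2l => //; apply: ler_wpM2l => //; lra.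
  rewrite -[X in _ <= X]mulrA; apply: ler_pM => //; first exact: mulr_ge0.
  by apply: ler_pM.
have H5 : \sum_(1 <= t < T.+1) Q t <= K.
  rewrite /Q /K exchange_big /=; apply: ler_sum => i _.
  under eq_bigr => t _ do rewrite mulrA.
  apply: (@tele_w R T (fun t => Num.sqrt (t%:R : R) / (2 * alpha) * w t i)
     (fun t => xs t i ^+ 2) (Dinf ^+ 2) T0).
  - by move=> t tT; rewrite mulr_ge0 // divr_ge0 ?sqrtr_ge0 // ltW.
  - move=> t /andP [t1 tT].
    have := winc t i; rewrite t1 tT => /(_ isT) hw.
    apply: ler_pM => //; first by rewrite divr_ge0 ?sqrtr_ge0 //; exact: ltW.
    by rewrite ler_pM2r ?invr_gt0 // ler_sqrt ?ler_nat.
  - by move=> t tt; exact: (xD t i tt).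
have K0 : 0 <= K.
  have ha : 0 < 2 * alpha by lra.
  by apply: sumr_ge0 => i _; rewrite mulr_ge0 ?sqr_ge0 // mulr_ge0 // divr_ge0 ?sqrtr_ge0 // ltW.
have hbt : forall t, 0 <= bt t <= beta1.
  move=> t; apply/andP; split; first by apply: mulr_ge0 => //; apply: exprn_ge0; exact: ltW.
  by apply: ler_piMr => //; apply: exprn_ile1; exact: ltW.
have hbdec : forall t, bt t.+1 <= bt t.
  move=> t; rewrite /bt ler_wpM2l // exprS ler_piMl ?exprn_ge0 ?ltW //.
have := @assemble R T E u v Q aP bt K beta1 T0 (introT andP (conj b10 b11)) hbt hbdec H1 H2 H3 H4 H5 K0 u0 aPz aP0.
move=> HA.
set L := 1 + ln (T%:R : R).
set SG := \sum_(i < d) Num.sqrt (\sum_(1 <= t < T.+1) (grad (f t) (theta t) ord0 i ^+ 2) ^+ 2).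
have L0 : 0 < L.
  rewrite /L; have : 0 <= ln (T%:R : R) by apply: ln_ge0; rewrite ler1n.
  lra.
have SG0 : 0 <= SG by apply: sumr_ge0 => i _; exact: sqrtr_ge0.
have HaP : \sum_(1 <= t < T.+1) aP t <= alpha / Num.sqrt c / (1 - beta1) * (SG * Num.sqrt L).
  have s1 : \sum_(1 <= t < T.+1) aP t <=
      \sum_(1 <= t < T.+1) \sum_(i < d) alpha / Num.sqrt c * (m t ord0 i ^+ 2 / Num.sqrt t%:R).
    apply: ler_sum_nat => t tT; rewrite /aP /P mulr_sumr; apply: ler_sum => i _.
    have tT' : (1 <= t <= T)%N by rewrite -ltnS.
    have st : 0 < Num.sqrt (t%:R : R) by rewrite sqrtr_gt0 ltr0n; case/andP: tT'.
    have hw := wc t i tT'.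
    have h : m t ord0 i ^+ 2 / w t i <= m t ord0 i ^+ 2 / Num.sqrt c.
      by rewrite ler_wpM2l ?sqr_ge0 // lef_pV2 ?posrE // (lt_le_trans sc0 hw).
    apply: (@le_trans _ _ (a t * (m t ord0 i ^+ 2 / Num.sqrt c))).
      by apply: ler_wpM2l.
    rewrite /a le_eqVlt; apply/orP; left; apply/eqP; field.
    by apply/andP; split; apply/eqP; lra.
  apply: (le_trans s1); rewrite exchange_big /=.
  under eq_bigr => i _ do rewrite -mulr_sumr.
  rewrite -mulr_sumr /SG mulr_suml mulr_sumr mulr_sumr; apply: ler_sum => i _.
  rewrite -!mulrA; apply: ler_wpM2l; first exact: ltW.
  apply: ler_wpM2l; first by rewrite invr_ge0 sqrtr_ge0.
  have hm := @mom_sq R T (fun t => m t ord0 i ^+ 2) (fun t => grad (f t) (theta t) ord0 i ^+ 2) beta1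
     (introT andP (conj b10 b11)).
  rewrite /= m0 mxE expr0n /= in hm.
  have := hm erefl (fun t => sqr_ge0 _).
  have hrec : forall t, (1 <= t <= T)%N -> m t ord0 i ^+ 2 <= beta1 * m t.-1 ord0 i ^+ 2 + grad (f t) (theta t) ord0 i ^+ 2.
    move=> t tT.
    have e : (bt t *: m t.-1 + (1 - bt t) *: grad (f t) (theta t)) ord0 i =
       bt t * m t.-1 ord0 i + (1 - bt t) * grad (f t) (theta t) ord0 i by rewrite !mxE.
    rewrite (Hm t tT) e.
    have /andP [h0 h1] := hbt t.
    move: (bt t) (m t.-1 ord0 i) (grad (f t) (theta t) ord0 i) h0 h1 => b M G h0 h1.
    have hb1 : 0 <= 1 - b by lra.
    have k1 := mulr_ge0 (mulr_ge0 h0 hb1) (sqr_ge0 (M - G)).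
    have k2 : 0 <= (beta1 - b) * M ^+ 2 by rewrite mulr_ge0 ?sqr_ge0 //; lra.
    have k3 := mulr_ge0 h0 (sqr_ge0 G).
    have -> : (b * M + (1 - b) * G) ^+ 2 = beta1 * M ^+ 2 + G ^+ 2 - (b * (1 - b) * (M - G) ^+ 2 + (beta1 - b) * M ^+ 2 + b * G ^+ 2) by ring.
    lra.
  move=> /(_ hrec) hm2.
  apply: (le_trans hm2); apply: ler_wpM2l; first by rewrite invr_ge0; lra.
  apply: (@cs_nat R T (fun t => grad (f t) (theta t) ord0 i ^+ 2) (fun t => (Num.sqrt (t%:R : R))^-1) L L0).
  apply: le_trans (harm_ln R T T0); apply: ler_sum_nat => t /andP [t1 _].
  by rewrite exprVn sqr_sqrtr ?ler0n.
have HL : \sum_(1 <= t < T.+1) (f t (theta t) - f t thetastar) <= \sum_(1 <= t < T.+1) E t.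
  by apply: ler_sum_nat => t tT; apply: HE; rewrite -ltnS.
set W := \sum_(i < d) Num.sqrt (s T ord0 i).
have KE : K = Num.sqrt (T%:R) / (2 * alpha) * Dinf ^+ 2 * W.
  rewrite /K /W mulr_sumr; apply: eq_bigr => i _; rewrite /w; ring.
have G0 : 0 <= Ginf.
  have := Hg 1%N; rewrite T0 => /(_ isT) hg.
  have : 0 <= linf (grad (f 1%N) (theta 1%N)).
    rewrite /linf; apply: (big_ind (fun x => 0 <= x)) => //.
    by move=> x y hx hy; rewrite le_max hx.
  lra.
have T3 : 0 <= Dinf ^+ 2 * beta1 * Ginf / (2 * (1 - beta1) * (1 - lambda) ^+ 2 * alpha).
  apply: divr_ge0; first by apply: mulr_ge0 => //; apply: mulr_ge0 => //; exact: sqr_ge0.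
  apply: mulr_ge0; last lra.
  apply: mulr_ge0; [lra | exact: sqr_ge0].
have E1 : (1 + beta1 / (1 - beta1)) * K =
   Dinf ^+ 2 * Num.sqrt T%:R / (2 * alpha * (1 - beta1)) * W.
  rewrite KE; field; apply/andP; split; apply/eqP; lra.
set Z := alpha * Num.sqrt L * SG / Num.sqrt c.
have Z0 : 0 <= Z by rewrite /Z divr_ge0 ?sqrtr_ge0 // mulr_ge0 ?mulr_ge0 ?sqrtr_ge0 // ltW.
have E2 : ((1 + beta1 / (1 - beta1)) / 2 + beta1 / (1 - beta1)) *
    (alpha / Num.sqrt c / (1 - beta1) * (SG * Num.sqrt L)) =
    (1 + 2 * beta1) / (2 * (1 - beta1) ^+ 2) * Z.
  rewrite /Z; field; apply/andP; split; apply/eqP; lra.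
have E3 : (1 + beta1) * alpha * Num.sqrt L / (2 * Num.sqrt c * (1 - beta1) ^+ 3) * SG
    = (1 + beta1) / (2 * (1 - beta1) ^+ 3) * Z.
  rewrite /Z; field; apply/andP; split; apply/eqP; lra.
have C : (1 + 2 * beta1) / (2 * (1 - beta1) ^+ 2) <= (1 + beta1) / (2 * (1 - beta1) ^+ 3).
  have h1 : 0 < 1 - beta1 by lra.
  rewrite ler_pdivrMr; last by rewrite mulr_gt0 // exprn_gt0.
  rewrite mulrAC ler_pdivlMr; last by rewrite mulr_gt0 // exprn_gt0.
  rewrite !exprS expr0; have hh : 0 <= ((1 - beta1) * beta1) ^+ 2 by exact: sqr_ge0.
  nra.
have CZ := ler_wpM2r Z0 C.
have c2 : 0 <= (1 + beta1 / (1 - beta1)) / 2 + beta1 / (1 - beta1).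
  have : 0 <= beta1 / (1 - beta1) by rewrite divr_ge0 //; lra.
  lra.
have HaP' := ler_wpM2l c2 HaP.
rewrite E3.
move: HA HL HaP' CZ T3; rewrite E1 E2.
set A1 := \sum_(1 <= t < T.+1) E t.
set A2 := \sum_(1 <= t < T.+1) (f t _ - _).
set A3 := \sum_(1 <= t < T.+1) aP t.
move=> HA' HL' HaP'' CZ' T3'.
apply: (le_trans HL'); apply: (le_trans HA'); rewrite -addrA lerD2l.
apply: (le_trans HaP''); apply: (le_trans CZ'); by rewrite lerDl.
Qed.
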